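(* Let $G$ be a Garside group with Garside monoid $M$ (so $M\subset G$). For every $a\in G$, the centralizer $Z(a)=\{c\in G:\ ca=ac\}$ is generated (as a group) by elements of $M$, i.e. $Z(a)$ is generated by $Z(a)\cap M$.
   Context: A monoid $M$ is atomic if it is generated by its atoms (elements $x\neq 1$ such that $x=yz$ implies $y=1$ or $z=1$) and for every $a\in M$ there is $N_a>0$ such that $a$ is not a product of more than $N_a$ atoms. A Garside monoid is an atomic, left and right cancellative monoid in which every pair of elements has left and right least common multiples and greatest common divisors, and which has a Garside element $\Delta$: an element whose left divisors coincide with its right divisors, form a finite set, and generate $M$. A Garside group is the group of fractions $G$ of a Garside monoid $M$; $M$ embeds in $G$ and its elements are called positive. (It is known that some power $\Delta^k$, $k\geq 1$, is central in $G$, and every element of $G$ can be multiplied by a suitable power of $\Delta^{k}$ to become positive.) *)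

(* Defs.v *)
From Stdlib Require Import List.
Import ListNotations.

Record Group := {
  carrier :> Type;
  gmul : carrier -> carrier -> carrier;
  gone : carrier;
  ginv : carrier -> carrier;
  gmulA : forall x y z, gmul x (gmul y z) = gmul (gmul x y) z;
  gmul1l : forall x, gmul gone x = x;
  gmul1r : forall x, gmul x gone = x;
  gmulVl : forall x, gmul (ginv x) x = gone;
  gmulVr : forall x, gmul x (ginv x) = gone
}.

Set Implicit Arguments.
Unset Strict Implicit.

Section Defs.
Variable G : Group.
Local Infix "**" := (gmul G) (at level 40, left associativity).
Local Notation e := (gone G).

Definition lprod (l : list G) : G := fold_right (fun x acc => x ** acc) e l.

Definition submonoid (M : G -> Prop) : Prop :=
  M e /\ forall x y, M x -> M y -> M (x ** y).

Definition ldiv (M : G -> Prop) (x y : G) : Prop :=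
  M x /\ M y /\ exists z, M z /\ y = x ** z.
Definition rdiv (M : G -> Prop) (x y : G) : Prop :=
  M x /\ M y /\ exists z, M z /\ y = z ** x.

Definition atom (M : G -> Prop) (x : G) : Prop :=
  M x /\ x <> e /\ forall y z, M y -> M z -> x = y ** z -> y = e \/ z = e.

Definition atomic (M : G -> Prop) : Prop :=
  (forall a, M a -> exists l, Forall (atom M) l /\ lprod l = a) /\
  (forall a, M a -> exists N : nat, N > 0 /\
     forall l, Forall (atom M) l -> lprod l = a -> length l <= N).

Definition is_lcm (d : G -> G -> Prop) (a b m : G) : Prop :=
  d a m /\ d b m /\ forall n, d a n -> d b n -> d m n.
Definition is_gcd (d : G -> G -> Prop) (a b g : G) : Prop :=
  d g a /\ d g b /\ forall h, d h a -> d h b -> d h g.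

Definition garside_element (M : G -> Prop) (D : G) : Prop :=
  M D /\
  (forall x, ldiv M x D <-> rdiv M x D) /\
  (exists l : list G, forall x, ldiv M x D -> In x l) /\
  (forall a, M a -> exists l, Forall (fun x => ldiv M x D) l /\ lprod l = a).

(** Group of fractions: the inclusion M -> G has the universal property
    (every monoid morphism M -> H into a group extends uniquely to a
    group morphism G -> H). *)
Definition group_of_fractions (M : G -> Prop) : Prop :=
  forall (H : Group) (f : G -> H),
    f e = gone H ->
    (forall x y, M x -> M y -> f (x ** y) = gmul H (f x) (f y)) ->
    (exists g : G -> H,
        (forall x y, g (x ** y) = gmul H (g x) (g y)) /\
        (forall x, M x -> g x = f x)) /\
    (forall g1 g2 : G -> H,
        (forall x y, g1 (x ** y) = gmul H (g1 x) (g1 y)) ->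
        (forall x y, g2 (x ** y) = gmul H (g2 x) (g2 y)) ->
        (forall x, M x -> g1 x = f x) -> (forall x, M x -> g2 x = f x) ->
        forall x, g1 x = g2 x).

(** (G, M) is a Garside group with Garside monoid M embedded in G.
    Cancellativity of M is automatic since M is a subset of the group G. *)
Definition garside_group (M : G -> Prop) : Prop :=
  submonoid M /\
  atomic M /\
  (forall a b, M a -> M b ->
     (exists m, is_lcm (ldiv M) a b m) /\ (exists m, is_lcm (rdiv M) a b m) /\
     (exists g, is_gcd (ldiv M) a b g) /\ (exists g, is_gcd (rdiv M) a b g)) /\
  (exists D, garside_element M D) /\
  group_of_fractions M.

Inductive gen (S : G -> Prop) : G -> Prop :=
| gen_in : forall x, S x -> gen S x
| gen_one : gen S e
| gen_mul : forall x y, gen S x -> gen S y -> gen S (x ** y)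
| gen_inv : forall x, gen S x -> gen S (ginv G x).

Definition centralizer (a : G) : G -> Prop := fun c => c ** a = a ** c.

End Defs.

(* Main.v *)
Require Import Defs.
From Stdlib Require Import List Arith Lia Classical ClassicalEpsilon ProofIrrelevance.
Import ListNotations.

Section GL.
Variable G : Group.
Local Infix "**" := (gmul G) (at level 40, left associativity).
Local Notation e := (gone G).
Local Notation inv := (ginv G).

Ltac assoc := repeat rewrite (gmulA G).

Lemma cancel_l (a x y : G) : a ** x = a ** y -> x = y.
Proof.
  intros H. rewrite <- (gmul1l G x), <- (gmul1l G y), <- (gmulVl G a).
  rewrite <- !(gmulA G), H. reflexivity.
Qed.

Lemma cancel_r (a x y : G) : x ** a = y ** a -> x = y.
Proof.
  intros H. rewrite <- (gmul1r G x), <- (gmul1r G y), <- (gmulVr G a).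
  rewrite !(gmulA G), H. reflexivity.
Qed.

Lemma inv_uniq (x y : G) : x ** y = e -> inv x = y.
Proof. intros H. apply (cancel_l x). rewrite gmulVr. auto. Qed.

Lemma inv_mul (x y : G) : inv (x ** y) = inv y ** inv x.
Proof.
  apply inv_uniq. assoc. rewrite <- (gmulA G x y), gmulVr, gmul1r, gmulVr. auto.
Qed.

Lemma inv_inv (x : G) : inv (inv x) = x.
Proof. apply inv_uniq. apply gmulVl. Qed.

Variable D : G.
Fixpoint pw (n : nat) : G := match n with 0 => e | S n => D ** pw n end.

Lemma pw_add a b : pw (a + b) = pw a ** pw b.
Proof.
  induction a; simpl. rewrite gmul1l; auto. rewrite IHa. assoc. auto.
Qed.

Lemma pw_comm a b : pw a ** pw b = pw b ** pw a.
Proof. rewrite <- !pw_add, Nat.add_comm. auto. Qed.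

Definition cj n x := inv (pw n) ** x ** pw n.

Lemma cj_add a b x : cj (a + b) x = cj b (cj a x).
Proof. unfold cj. rewrite pw_add, inv_mul. assoc. auto. Qed.

Lemma cj_add' a b x : cj (a + b) x = cj a (cj b x).
Proof. rewrite Nat.add_comm. apply cj_add. Qed.

Lemma cj_inj n x y : cj n x = cj n y -> x = y.
Proof. unfold cj. intros H. apply cancel_r in H. apply cancel_l in H. auto. Qed.

Lemma cj_spec n x : pw n ** cj n x = x ** pw n.
Proof. unfold cj. assoc. rewrite gmulVr, gmul1l. auto. Qed.

Lemma php (f : nat -> G) (l : list G) :
  (forall i, In (f i) l) -> exists i j, i < j /\ f i = f j.
Proof.
  intros Hin. apply NNPP. intros Hno.
  set (ls := fix ls n := match n with 0 => [] | S n => f n :: ls n end).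
  assert (Hlen : forall n, length (ls n) = n) by (induction n; simpl; auto).
  assert (HinL : forall n x, In x (ls n) -> exists i, i < n /\ f i = x).
  { induction n; simpl; intros x H. contradiction.
    destruct H as [H|H]. exists n; auto. destruct (IHn x H) as [i [? ?]]. exists i; split; auto. }
  assert (Hnd : forall n, NoDup (ls n)).
  { induction n; simpl. constructor. constructor; auto.
    intros H. destruct (HinL n _ H) as [i [Hi Hf]]. apply Hno. exists i, n. auto. }
  assert (Hinc : forall n, incl (ls n) l).
  { intros n x H. destruct (HinL n x H) as [i [_ <-]]. auto. }
  pose proof (NoDup_incl_length (Hnd (S (length l))) (Hinc _)).
  rewrite Hlen in H. lia.
Qed.

End GL.

Section GM.
Variable G : Group.
Local Infix "**" := (gmul G) (at level 40, left associativity).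
Local Notation e := (gone G).
Local Notation inv := (ginv G).
Variable M : G -> Prop.

Lemma sig_ext (P : G -> Prop) (u v : {x | P x}) : proj1_sig u = proj1_sig v -> u = v.
Proof. destruct u, v; simpl; intros ->. f_equal. apply proof_irrelevance. Qed.

Definition HG : Group.
Proof.
  refine {| carrier := {x : G | gen M x};
            gmul := fun x y => exist _ (proj1_sig x ** proj1_sig y)
                                   (gen_mul (proj2_sig x) (proj2_sig y));
            gone := exist _ e (gen_one M);
            ginv := fun x => exist _ (inv (proj1_sig x)) (gen_inv (proj2_sig x)) |};
  intros; apply sig_ext; simpl.
  apply gmulA. apply gmul1l. apply gmul1r. apply gmulVl. apply gmulVr.
Defined.

Lemma all_gen : submonoid M -> group_of_fractions M -> forall x, gen M x.
Proof.
  intros [M1 Mm] Hfr.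
  set (f := fun x : G => match excluded_middle_informative (gen M x) with
              | left p => (exist _ x p : carrier HG) | right _ => gone HG end).
  assert (Hf : forall x, M x -> proj1_sig (f x) = x).
  { intros x Hx. unfold f. destruct (excluded_middle_informative (gen M x)) as [p|n].
    reflexivity. exfalso. apply n. apply gen_in. auto. }
  destruct (Hfr HG f) as [[g [Hg1 Hg2]] _].
  - apply sig_ext. apply Hf. auto.
  - intros x y Hx Hy. apply sig_ext. simpl. rewrite !Hf; auto.
  - intros x.
    destruct (Hfr G (fun x => x) eq_refl (fun _ _ _ _ => eq_refl)) as [_ U].
    rewrite (U (fun x => x) (fun x => proj1_sig (g x))).
    + apply (proj2_sig (g x)).
    + auto.
    + intros. rewrite Hg1. reflexivity.
    + auto.
    + intros y Hy. rewrite Hg2; auto.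
Qed.

End GM.

Theorem lemma3p1 (G : Group) (M : G -> Prop) :
  garside_group M ->
  forall a c : G,
    centralizer a c <-> gen (fun x => M x /\ centralizer a x) c.
Proof.
  intros HG a c. split; cycle 1.
  { intros H. induction H as [x [_ Hx]| | x y _ IHx _ IHy | x _ IH];
      unfold centralizer in *.
    - auto.
    - rewrite gmul1l, gmul1r. auto.
    - rewrite <- gmulA, IHy, gmulA, IHx, gmulA. auto.
    - apply (cancel_l G x). rewrite gmulA, gmulVr, gmul1l.
      apply (cancel_r G x). rewrite <- !gmulA. rewrite gmulVl, gmul1r. auto.
      }
  destruct HG as [Hsub [_ [_ [[D [MD [Hlr [[l Hl] Hgen]]]] Hfr]]]].
  pose proof (all_gen G M Hsub Hfr) as Hall.
  destruct Hsub as [M1 Mm].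
  set (Sp := fun x => ldiv M x D).
  set (P := pw G D). set (C := cj G D).
  assert (HS1 : forall s, Sp s -> Sp (C 1 s)).
  { intros s [Ms [_ [t [Mt Ht]]]].
    assert (Hr : rdiv M t D) by (repeat split; auto; exists s; auto).
    apply Hlr in Hr. destruct Hr as [_ [_ [r [Mr Hr]]]].
    assert (E : C 1 s = r).
    { apply (cancel_l G D). pose proof (cj_spec G D 1 s) as E. simpl in E.
      rewrite gmul1r in E. fold C in E. rewrite E, Hr at 1. rewrite Ht at 1.
      rewrite <- gmulA, <- Hr. auto. }
    rewrite E. apply Hlr. repeat split; auto. exists t; auto. }
  assert (HSn : forall n s, Sp s -> Sp (C n s)).
  { induction n; intros s Hs.
    - unfold C, cj. simpl. replace (ginv G (gone G)) with (gone G).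
      rewrite gmul1l, gmul1r. auto. symmetry. apply inv_uniq. apply gmul1l.
    - replace (S n) with (n + 1) by lia. unfold C. rewrite cj_add. apply HS1, IHn, Hs. }
  assert (C0 : forall x, C 0 x = x).
  { intros x. unfold C, cj. simpl. replace (ginv G (gone G)) with (gone G).
    rewrite gmul1l, gmul1r. auto. symmetry. apply inv_uniq. apply gmul1l. }
  assert (Hper : forall s, Sp s -> exists p, p >= 1 /\ C p s = s).
  { intros s Hs. destruct (php G (fun i => C i s) l) as [i [j [Hij E]]].
    - intros i. apply Hl. apply HSn, Hs.
    - exists (j - i). split. lia. apply (cj_inj G D i). fold C.
      rewrite E. unfold C. rewrite <- cj_add'. f_equal. lia. }
  assert (Hmul : forall p q s, C p s = s -> C (p * q) s = s).
  { intros p q s E. induction q. rewrite Nat.mul_0_r. auto.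
    rewrite Nat.mul_succ_r. unfold C in *. rewrite cj_add, IHq. auto. }
  assert (HK : forall l', exists K, K >= 1 /\ forall x, In x l' -> Sp x -> C K x = x).
  { induction l' as [|y l' [K [HK1 HK]]].
    - exists 1. split. auto. intros x [].
    - destruct (classic (Sp y)) as [Sy|nSy].
      + destruct (Hper y Sy) as [p [Hp Ep]]. exists (K * p). split. nia.
        intros x [<-|Hx] Hsx. rewrite Nat.mul_comm. auto.
        apply Hmul. auto.
      + exists K. split. auto. intros x [<-|Hx] Hsx. contradiction. auto. }
  destruct (HK l) as [K [HK1 HKc]].
  assert (CS : forall s, Sp s -> gmul G (P K) s = gmul G s (P K)).
  { intros s Hs. unfold P. rewrite <- (cj_spec G D K s). fold C. rewrite (HKc s); auto.
  }
  assert (Hcentral_gen : forall z, (forall s, Sp s -> gmul G z s = gmul G s z) ->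
                         forall x, gmul G z x = gmul G x z).
  { intros z Hz x.
    assert (HM : forall m, M m -> gmul G z m = gmul G m z).
    { intros m Hm. destruct (Hgen m Hm) as [ls [Hls <-]]. clear Hm.
      induction Hls as [|s ls Hs _ IH]; simpl.
      - rewrite gmul1l, gmul1r. auto.
      - rewrite gmulA, Hz, <- gmulA, IH, gmulA; auto. }
    induction (Hall x) as [x Hx| | x y _ IHx _ IHy | x _ IH].
    - auto.
    - rewrite gmul1l, gmul1r. auto.
    - rewrite gmulA, IHx, <- gmulA, IHy, gmulA. auto.
    - apply (cancel_l G x). rewrite gmulA, <- IH, <- gmulA, gmulVr, gmulA, gmulVr,
        gmul1l, gmul1r. auto. }
  assert (Cc : forall n x, gmul G (P (K * n)) x = gmul G x (P (K * n))).
  { intros n. apply Hcentral_gen. intros s Hs. induction n.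
    - rewrite Nat.mul_0_r. simpl. rewrite gmul1l, gmul1r. auto.
    - rewrite Nat.mul_succ_r. unfold P. rewrite pw_add. fold P.
      rewrite <- gmulA, CS, gmulA, IHn, gmulA; auto. }
  assert (MP : forall n, M (P n)).
  { induction n; simpl; auto. }
  assert (Hdiv : forall m, M m -> exists n u, M u /\ gmul G m u = P n).
  { intros m Hm. destruct (Hgen m Hm) as [ls [Hls <-]]. clear Hm.
    induction Hls as [|s ls Hs _ [n [u [Mu Eu]]]]; simpl.
    - exists 0, (gone G). split; auto. apply gmul1l.
    - destruct (HSn n s Hs) as [_ [_ [w [Mw Ew]]]].
      exists (n + 1), (gmul G u w). split. auto.
      unfold P in *. rewrite pw_add. simpl. rewrite gmul1r.
      transitivity (gmul G (pw G D n) (gmul G (C n s) w)); [| rewrite <- Ew; auto].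
      rewrite !gmulA. rewrite <- (gmulA G s), Eu.
      rewrite <- (cj_spec G D n s). fold C. auto. }
  assert (Hpos : forall x, exists n, M (gmul G x (P (K * n)))).
  { intros x. induction (Hall x) as [x Hx| | x y _ [n Hn] _ [m Hm] | x _ [n Hn]].
    - exists 0. rewrite Nat.mul_0_r. simpl. rewrite gmul1r. auto.
    - exists 0. rewrite Nat.mul_0_r. simpl. rewrite gmul1r. auto.
    - exists (n + m). rewrite Nat.mul_add_distr_l. unfold P. rewrite pw_add. fold P.
      replace (gmul G (gmul G x y) (gmul G (P (K * n)) (P (K * m))))
        with (gmul G (gmul G x (P (K * n))) (gmul G y (P (K * m)))); [auto|].
      rewrite gmulA, <- (gmulA G x (P (K * n)) y), Cc, !gmulA. auto.
    - destruct (Hdiv _ Hn) as [p [u [Mu Eu]]].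
      exists p.
      assert (Ex : ginv G x = gmul G (gmul G (P (K * n)) u) (ginv G (P p))).
      { apply (cancel_l G x). rewrite gmulVr, !gmulA, Eu, gmulVr. auto. }
      replace (K * p) with (p + (K * p - p)) by nia.
      rewrite Ex. unfold P. rewrite pw_add. fold P.
      rewrite gmulA, <- (gmulA G _ (ginv G (P p))), gmulVl, gmul1r. auto. }
  intros Hc. destruct (Hpos c) as [n Hn].
  assert (Ec : c = gmul G (gmul G c (P (K * n))) (ginv G (P (K * n)))).
  { rewrite <- gmulA, gmulVr, gmul1r. auto. }
  rewrite Ec. apply gen_mul; [apply gen_in|apply gen_inv, gen_in].
  - split. auto. unfold centralizer in *. rewrite <- gmulA, (Cc n a), gmulA, Hc, <- gmulA. auto.
  - split. auto. unfold centralizer. rewrite Cc. auto.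
Qed.
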